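(* Let $R$ be a full-rank order of rank $n$ in the number field $K=\mathrm{Q}(R)$, let $p$ be a prime and let $a\in\mathbb{Z}_{>0}$ satisfy $0<\operatorname{ord}_p(a)<\operatorname{ord}_p(\delta(R))$. If the ideal $\delta(R)R^\dagger+aR\subseteq R$ is invertible at $p$, then $p\le n$.
   Context: An order is a domain whose additive group is isomorphic to $\mathbb{Z}^n$ ($n$ its rank); $\mathrm{Q}(R)$ is its field of fractions, a number field of degree $n$. For an additive subgroup $I\subseteq K$, the trace dual is $I^\dagger=\{x\in K:\operatorname{Tr}_{K/\mathbb{Q}}(xI)\subseteq\mathbb{Z}\}$. The reduced discriminant $\delta(R)$ is the exponent of the finite abelian group $R^\dagger/R$. For a rational prime $p$, $R_p$ denotes the localization of $R$ at $p$ as a $\mathbb{Z}$-algebra (i.e. $\mathbb{Z}_{(p)}\otimes R$), and a fractional ideal $I$ of $R$ is invertible at $p$ if $IR_p$ is an invertible ideal of $R_p$, i.e. $(IR_p)J=R_p$ for some $R_p$-submodule $J\subseteq K$. *)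

(* Defs.v *)
From HB Require Import structures.
From mathcomp Require Import all_boot all_order all_algebra all_field.
Set Implicit Arguments. Unset Strict Implicit. Unset Printing Implicit Defensive.
Import Order.TTheory GRing.Theory Num.Theory.
Local Open Scope ring_scope.

Section NumberField.
Variable K : fieldExtType rat.

Definition trace (x : K) : rat :=
  \tr (passmx.mxof (vbasis {:K}) (vbasis {:K}) (amulr x)).

Definition Zspan n (b : n.-tuple K) (x : K) : Prop :=
  exists z : 'I_n -> int, x = \sum_(i < n) (z i)%:~R *: tnth b i.

Definition full_order (R : K -> Prop) (n : nat) : Prop :=
  [/\ R 1,
      (forall x y, R x -> R y -> R (x * y)) &
      exists b : n.-tuple K, basis_of fullv b /\ (forall x, R x <-> Zspan b x)].

Definition trace_dual (I : K -> Prop) (x : K) : Prop :=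
  forall y, I y -> trace (x * y) \is a Num.int.

(* d is the reduced discriminant delta(R): the exponent of R^dagger / R, i.e.
   the least positive integer killing R^dagger / R *)
Definition kills (R : K -> Prop) (d : nat) : Prop :=
  forall x, trace_dual R x -> R (d%:R * x).
Definition red_disc (R : K -> Prop) (d : nat) : Prop :=
  [/\ (0 < d)%N, kills R d & forall e, (0 < e)%N -> kills R e -> (d <= e)%N].

Definition localize (R : K -> Prop) (p : nat) (x : K) : Prop :=
  exists r (s : nat), [/\ R r, ~~ (p %| s)%N & x = r / s%:R].

Definition prod_set (A B : K -> Prop) (x : K) : Prop :=
  exists m (a b : 'I_m -> K),
    [/\ forall i, A (a i), forall i, B (b i) & x = \sum_(i < m) a i * b i].

Definition submodule (S J : K -> Prop) : Prop :=
  [/\ J 0, (forall x y, J x -> J y -> J (x - y)) &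
      forall s x, S s -> J x -> J (s * x)].

Definition invertible_at (R : K -> Prop) (p : nat) (I : K -> Prop) : Prop :=
  exists J : K -> Prop, submodule (localize R p) J /\
    forall x, prod_set (prod_set I (localize R p)) J x <-> localize R p x.

Definition dual_plus (R : K -> Prop) (d a : nat) (x : K) : Prop :=
  exists u r, [/\ trace_dual R u, R r & x = d%:R * u + a%:R * r].

End NumberField.

(* Main.v *)
Require Import Defs.
From HB Require Import structures.
From mathcomp Require Import all_boot all_order all_algebra all_field.
From mathcomp Require Import zify ring lra.
Set Implicit Arguments. Unset Strict Implicit. Unset Printing Implicit Defensive.
Import Order.TTheory GRing.Theory Num.Theory.
Local Open Scope ring_scope.

Section Tr.
Variable K : fieldExtType rat.
Local Notation N := (\dim {:K}).

Definition Mx (e : N.-tuple K) (x : K) := passmx.mxof e e (amulr x).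

Lemma trace_basis (e : N.-tuple K) : basis_of fullv e ->
  forall x, trace x = \tr (Mx e x).
Proof.
move=> eB x; set vb := vbasis (fullv : {vspace K}); have vbB : basis_of fullv vb := vbasisP _.
rewrite /trace /Mx.
have -> : amulr x = (\1 \o (amulr x \o \1))%VF by rewrite comp_lfun1l comp_lfun1r.
rewrite (passmx.mxof_comp e e vbB) (passmx.mxof_comp e vb vbB).
rewrite mxtrace_mulC mulmxA -(passmx.mxof_comp vb vb eB) comp_lfun1l.
by rewrite comp_lfun1l comp_lfun1r passmx.mxof1 ?mul1mx // (basis_free vbB).
Qed.

Lemma MxM (e : N.-tuple K) : basis_of fullv e ->
  forall x y, Mx e (x * y) = Mx e x *m Mx e y.
Proof.
move=> eB x y; rewrite /Mx -(passmx.mxof_comp e e eB); congr passmx.mxof.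
by apply/lfunP => w; rewrite comp_lfunE !lfunE /= mulrA.
Qed.

Lemma Mx1 (e : N.-tuple K) : basis_of fullv e -> Mx e 1 = 1%:M.
Proof.
move=> eB; rewrite /Mx -(passmx.mxof1 (basis_free eB)); congr passmx.mxof.
by apply/lfunP => w; rewrite id_lfunE !lfunE /= mulr1.
Qed.

Lemma MxE (e : N.-tuple K) x i j : Mx e x i j = coord e j (e`_i * x).
Proof.
by rewrite /Mx /passmx.mxof /lin1_mx mxE /= passmx.vecof_delta lfunE /= mxE.
Qed.

Lemma MxD (e : N.-tuple K) x y : Mx e (x + y) = Mx e x + Mx e y.
Proof. rewrite /Mx. have -> : amulr (x + y) = amulr x + amulr y by apply/lfunP => w; rewrite !lfunE /= !lfunE /= mulrDr. apply/matrixP => i j. by rewrite /passmx.mxof /lin1_mx !mxE /= add_lfunE linearD. Qed.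

End Tr.
Lemma idem_tr_gen (F : fieldType) n r (E : 'M[F]_n) (C : 'M_(n, r)) (B : 'M_(r, n)) :
  row_full C -> row_free B -> C *m B = E -> E *m E = E -> \tr E = r%:R.
Proof.
move=> Cf Bf CB EE.
have BC : B *m C = 1%:M.
  apply: (row_full_inj Cf); apply: (row_free_inj Bf).
  by rewrite mulmx1 !mulmxA CB -mulmxA CB EE.
by rewrite -CB mxtrace_mulC BC mxtrace1.
Qed.

Lemma idem_tr (F : fieldType) n (E : 'M[F]_n) : E *m E = E -> \tr E = (\rank E)%:R.
Proof.
move=> EE; exact: (idem_tr_gen (col_base_full E) (row_base_free E) (mulmx_base E) EE).
Qed.

Lemma pigeon (T : finType) (f : nat -> T) : exists i j, (i < j)%N /\ f i = f j.
Proof.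
pose g (i : 'I_(#|T|.+1)) := f i.
have : ~~ injectiveb g.
  apply/negP => /injectiveP inj; have := leq_card _ inj.
  by rewrite card_ord ltnn.
case/injectivePn => i [j neq gij].
case: (ltngtP i j) => [lt|lt|/val_inj eq]; last by rewrite eq eqxx in neq.
- by exists i, j.
- by exists j, i.
Qed.

Lemma nil_Fp p n (f : nat -> 'M['F_p]_n) : prime p -> (n < p)%N ->
  (forall i j, f (i + j)%N = f i *m f j) ->
  (forall j, (0 < j)%N -> \tr (f j) = 0) ->
  exists m, (0 < m)%N /\ f m = 0.
Proof.
move=> pp np fM ftr.
have [i [j [lij fij]]] := pigeon f.
set q := (j - i)%N.
have per : forall c a, (i <= a)%N -> f (a + c * q)%N = f a.
  elim=> [|c IH] a ia; first by rewrite mul0n addn0.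
  rewrite mulSn addnA IH; last by lia.
  have -> : (a + q = (a - i) + j)%N by rewrite /q; lia.
  rewrite fM -fij -fM.
  by have -> : (a - i + i = a)%N by lia.
set m := ((i + 1) * q)%N.
have qpos : (0 < q)%N by rewrite /q; lia.
have mpos : (0 < m)%N by rewrite /m muln_gt0 addn1.
exists m; split => //.
have EE : f m *m f m = f m.
  rewrite -fM per //.
  by rewrite /m; nia.
have := idem_tr EE; rewrite ftr //.
move/esym/eqP; rewrite -(dvdn_pcharf (pchar_Fp pp)) => dv.
have rk : (\rank (f m) < p)%N by apply: leq_ltn_trans (rank_leq_row _) np.
have : \rank (f m) = 0%N.
  case: (posnP (\rank (f m))) => // r0.
  by have := dvdn_leq r0 dv; rewrite leqNgt rk.
by move/eqP; rewrite mxrank_eq0 => /eqP.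
Qed.
Section Basics.
Variable K : fieldExtType rat.

Lemma natK (n : nat) : (n%:R : K) = (n%:R : rat) *: 1.
Proof. by rewrite scaler_nat. Qed.

Lemma natK_neq0 (n : nat) : (0 < n)%N -> (n%:R : K) != 0.
Proof.
by move=> n0; rewrite natK scaler_eq0 oner_eq0 orbF pnatr_eq0 -lt0n.
Qed.

Lemma natKM (n : nat) (x : K) : n%:R * x = (n%:R : rat) *: x.
Proof. by rewrite natK -scalerAl mul1r. Qed.

Lemma invnatKM (n : nat) (x : K) : (0 < n)%N -> (n%:R : K)^-1 * x = (n%:R : rat)^-1 *: x.
Proof.
move=> n0; rewrite natK.
have -> : ((n%:R : rat) *: (1 : K))^-1 = (n%:R : rat)^-1 *: 1.
  by rewrite -!in_algE fmorphV.
by rewrite -scalerAl mul1r.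
Qed.

End Basics.

Section Order.
Variable K : fieldExtType rat.
Local Notation N := (\dim {:K}).
Variable R : K -> Prop.
Variable b : N.-tuple K.
Hypothesis bB : basis_of fullv b.
Hypothesis RZ : forall x, R x <-> Zspan b x.
Hypothesis R1 : R 1.
Hypothesis RM : forall x y, R x -> R y -> R (x * y).

Lemma RcoordP x : R x <-> forall i, coord b i x \is a Num.int.
Proof.
rewrite RZ; split.
  case=> z -> i.
  have -> : \sum_(i0 < N) (z i0)%:~R *: tnth b i0 = \sum_(i0 < N) (z i0)%:~R *: b`_i0.
    by apply: eq_bigr => j _; rewrite (tnth_nth 0).
  by rewrite coord_sum_free ?(basis_free bB) // rpred_int.
move=> H; exists (fun i => numq (coord b i x)).
rewrite {1}(coord_basis bB (memvf x)); apply: eq_bigr => i _.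
by rewrite (tnth_nth 0) numqK.
Qed.

Lemma RD x y : R x -> R y -> R (x + y).
Proof. by move=> /RcoordP Hx /RcoordP Hy; apply/RcoordP => i; rewrite linearD rpredD ?Hx ?Hy. Qed.

Lemma R0 : R 0.
Proof. by apply/RcoordP => i; rewrite linear0. Qed.

Lemma RN x : R x -> R (- x).
Proof. by move=> /RcoordP Hx; apply/RcoordP => i; rewrite linearN rpredN ?Hx. Qed.

Lemma RMz x z : R x -> R (x *~ z).
Proof. by move=> /RcoordP Hx; apply/RcoordP => i; rewrite raddfMz rpredMz ?Hx. Qed.

Lemma RMn x n : R x -> R (x *+ n).
Proof. by move=> Hx; rewrite -mulrz_nat; apply: RMz. Qed.

Lemma Rnat n : R n%:R.
Proof. exact: RMn. Qed.

Lemma Rsum (I : finType) (F : I -> K) : (forall i, R (F i)) -> R (\sum_i F i).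
Proof.
move=> H; apply: (big_ind R R0 RD) => i _; exact: H.
Qed.

Lemma Rexp x n : R x -> R (x ^+ n).
Proof. by move=> Hx; elim: n => [|n IH]; rewrite ?expr0 // exprS; apply: RM. Qed.

Lemma Rb (i : 'I_N) : R b`_i.
Proof.
by apply/RcoordP => j; rewrite coord_free ?(basis_free bB) //; case: (i == j).
Qed.

Lemma trace_add (x y : K) : trace (x + y) = trace x + trace y.
Proof.
rewrite !(trace_basis (vbasisP fullv)) MxD; exact: mxtraceD.
Qed.

Lemma trace0 : trace (0 : K) = 0.
Proof. have h := trace_add 0 0; rewrite addr0 in h; apply: (addrI (trace (0:K))); by rewrite addr0 -h. Qed.

Lemma trace_Mn (x : K) n : trace (x *+ n) = trace x *+ n.
Proof. by elim: n => [|n IH]; rewrite ?mulr0n ?trace0 // !mulrS trace_add IH. Qed.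

Lemma trace_natM (n : nat) (x : K) : trace (n%:R * x) = n%:R * trace x.
Proof. by rewrite mulr_natl trace_Mn mulr_natl. Qed.

Lemma trace_sum (I : finType) (F : I -> K) : trace (\sum_i F i) = \sum_i trace (F i).
Proof.
exact: (big_morph _ trace_add trace0).
Qed.

Lemma trace_R x : R x -> trace x \is a Num.int.
Proof.
move=> Hx; rewrite (trace_basis bB) /mxtrace; apply: rpred_sum => i _.
rewrite MxE; move/RcoordP: (RM (Rb i) Hx); exact.
Qed.

Variable p : nat.
Hypothesis pp : prime p.

Definition red (q : rat) : 'F_p := (numq q)%:~R.

Lemma red_int (z : int) : red z%:~R = z%:~R.
Proof. by rewrite /red numq_int. Qed.

Lemma red_sum (I : finType) (F : I -> rat) : (forall i, F i \is a Num.int) ->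
  red (\sum_i F i) = \sum_i red (F i).
Proof.
move=> H.
have -> : \sum_i F i = (\sum_i numq (F i))%:~R.
  rewrite rmorph_sum; apply: eq_bigr => i _; exact: (esym (numqK (H i))).
by rewrite red_int rmorph_sum.
Qed.

Lemma red_mul (x y : rat) : x \is a Num.int -> y \is a Num.int -> red (x * y) = red x * red y.
Proof.
move=> Hx Hy; rewrite -(numqK Hx) -(numqK Hy) -intrM !red_int; exact: intrM.
Qed.

Definition intmx n (A : 'M[rat]_n) := forall i j, A i j \is a Num.int.

Lemma red_mulmx n (A B : 'M[rat]_n) : intmx A -> intmx B ->
  map_mx red (A *m B) = map_mx red A *m map_mx red B.
Proof.
move=> HA HB; apply/matrixP => i j; rewrite !mxE red_sum.
  by apply: eq_bigr => k _; rewrite red_mul // !mxE.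
by move=> k; rewrite rpredM.
Qed.

Lemma red_tr n (A : 'M[rat]_n) : intmx A -> \tr (map_mx red A) = red (\tr A).
Proof.
move=> HA; rewrite /mxtrace red_sum //.
by apply: eq_bigr => i _; rewrite mxE.
Qed.

Lemma Mx_int x : R x -> intmx (Mx b x).
Proof.
move=> Hx i j; rewrite MxE; move/RcoordP: (RM (Rb i) Hx); exact.
Qed.

Lemma NL (r : K) : (N < p)%N -> R r ->
  (forall j, (0 < j)%N -> (p %| numq (trace (r ^+ j)))%Z) ->
  exists m, (0 < m)%N /\ exists w, R w /\ r ^+ m = p%:R * w.
Proof.
move=> Np Rr Htr.
pose f j := map_mx red (Mx b (r ^+ j)).
have fM : forall i j, f (i + j)%N = f i *m f j.
  by move=> i j; rewrite /f exprD (MxM bB) red_mulmx //; apply: Mx_int; exact: Rexp.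
have ftr : forall j, (0 < j)%N -> \tr (f j) = 0.
  move=> j j0; rewrite /f red_tr; last by apply: Mx_int; exact: Rexp.
  rewrite -(trace_basis bB).
  by rewrite /red; apply/eqP; rewrite -(dvdz_pcharf (pchar_Fp pp)) Htr.
have [m [m0 fm]] := nil_Fp pp Np fM ftr.
exists m; split => //.
have Hdiv : forall i j, (p %| numq (Mx b (r ^+ m) i j))%Z.
  move=> i j; rewrite (dvdz_pcharf (pchar_Fp pp)).
  have e : f m i j = red (Mx b (r ^+ m) i j) by rewrite /f mxE.
  by rewrite fm mxE in e; rewrite /red in e; rewrite -e.
exists ((p%:R : rat)^-1 *: r ^+ m); split.
  apply/RcoordP => k.
  rewrite linearZ /=.
  rewrite -[r ^+ m]mul1r.
  rewrite {1}(coord_basis bB (memvf (1:K))) mulr_suml linear_sum /= mulr_sumr.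
  apply: rpred_sum => i _.
  rewrite -scalerAl linearZ /= -MxE.
  have [z ->] : exists z : int, Mx b (r ^+ m) i k = (z * p)%:~R.
    have /dvdzP [z hz] := Hdiv i k; exists z.
    by rewrite -hz (numqK (Mx_int (Rexp m Rr) _ _)).
  have hp : (p%:R : rat) != 0 by rewrite pnatr_eq0 -lt0n prime_gt0.
  rewrite intrM [X in X \in _](_ : _ = coord b i 1 * z%:~R); last first.
    by rewrite -[(p:int)%:~R]/(p%:R : rat); field.
  rewrite rpredM //; last by apply: rpred_int.
  by move/RcoordP: R1; exact.
rewrite natKM scalerA mulfV ?scale1r //.
by rewrite pnatr_eq0 -lt0n prime_gt0.
Qed.

End Order.

Section Main.
Variable K : fieldExtType rat.
Local Notation N := (\dim {:K}).
Variable R : K -> Prop.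
Hypothesis R1 : R 1.
Hypothesis RM : forall x y, R x -> R y -> R (x * y).
Hypothesis RD : forall x y, R x -> R y -> R (x + y).
Hypothesis RMz : forall x z, R x -> R (x *~ z).
Variable p : nat.
Hypothesis pp : prime p.
Local Notation Lp := (localize R p).

Lemma R0' : R 0.
Proof. by have := RMz 0 R1; rewrite mulr0z. Qed.

Lemma RMn' x n : R x -> R (x *+ n).
Proof. by move=> Hx; rewrite -mulrz_nat; apply: RMz. Qed.

Lemma ndvd_mul s1 s2 : ~~ (p %| s1)%N -> ~~ (p %| s2)%N -> ~~ (p %| s1 * s2)%N.
Proof. by move=> h1 h2; rewrite Euclid_dvdM // negb_or h1 h2. Qed.

Lemma ndvd_pos s : ~~ (p %| s)%N -> (0 < s)%N.
Proof. by case: s => // ; rewrite dvdn0. Qed.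

Lemma Lp_R x : R x -> Lp x.
Proof.
move=> Hx; exists x, 1%N; split => //; first by rewrite dvdn1; apply/eqP => e; move: (prime_gt1 pp); rewrite e.
by rewrite divr1.
Qed.

Lemma Lp1 : Lp 1.
Proof. exact: Lp_R. Qed.

Lemma LpM x y : Lp x -> Lp y -> Lp (x * y).
Proof.
case=> r1 [s1 [R1' h1 ->]] [r2 [s2 [R2 h2 ->]]].
exists (r1 * r2), (s1 * s2)%N; split; [exact: RM | exact: ndvd_mul |].
have n1 := natK_neq0 K (ndvd_pos h1); have n2 := natK_neq0 K (ndvd_pos h2).
by rewrite natrM invfM mulrACA.
Qed.

Lemma LpD x y : Lp x -> Lp y -> Lp (x + y).
Proof.
case=> r1 [s1 [R1' h1 ->]] [r2 [s2 [R2 h2 ->]]].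
exists (r1 *+ s2 + r2 *+ s1), (s1 * s2)%N; split; [|exact: ndvd_mul|].
  by apply: RD; apply: RMn'.
have n1 := natK_neq0 K (ndvd_pos h1); have n2 := natK_neq0 K (ndvd_pos h2).
rewrite natrM invfM -[r1 *+ s2]mulr_natr -[r2 *+ s1]mulr_natr mulrDl; congr (_ + _).
  by rewrite mulrACA mulfV // mulr1.
by rewrite (mulrC s1%:R^-1) mulrACA mulfV // mulr1.
Qed.

Lemma Lp0 : Lp 0.
Proof. exact: Lp_R R0'. Qed.

Lemma Lpnat n : Lp n%:R.
Proof. by apply: Lp_R; rewrite -[n%:R]/(1 *+ n); apply: RMn'. Qed.

Lemma Lpsum m (F : 'I_m -> K) : (forall i, Lp (F i)) -> Lp (\sum_i F i).
Proof. move=> H; apply: (big_ind Lp Lp0 LpD) => i _; exact: H. Qed.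

Lemma LpX x n : Lp x -> Lp (x ^+ n).
Proof. move=> Hx; elim: n => [|n IH]; first by rewrite expr0; exact: Lp1. by rewrite exprS; apply: LpM. Qed.

Lemma Lp_glob x : Lp x -> R (x *+ p) -> R x.
Proof.
case=> r [s [Rr hs ex]] Rp.
have sK := natK_neq0 K (ndvd_pos hs).
have Rs : R (x *+ s) by rewrite ex -[(r / s%:R) *+ s]mulr_natr divfK.
have cop : coprimez s p.
  by rewrite coprimezE /= coprime_sym prime_coprime.
have [[u v] /= huv] := coprimezP _ _ cop.
have e : x = (x *+ s) *~ u + (x *+ p) *~ v.
  rewrite -[x *+ s]mulrz_nat -[x *+ p]mulrz_nat -!mulrzA -mulrzDr.
  by rewrite !natz (mulrC (s:int) u) (mulrC (p:int) v) huv mulr1z.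
by rewrite e; apply: RD; apply: RMz.
Qed.

Definition Pp (q : rat) := exists s : nat, ~~ (p %| s)%N /\ exists c : int, s%:R * q = p%:R * c%:~R.

Lemma Pp0 : Pp 0.
Proof.
exists 1%N; split; last by exists 0; rewrite mulr0 mulr0.
by rewrite dvdn1; apply/eqP => e; move: (prime_gt1 pp); rewrite e.
Qed.

Lemma Pp_add q1 q2 : Pp q1 -> Pp q2 -> Pp (q1 + q2).
Proof.
case=> s1 [h1 [c1 e1]] [s2 [h2 [c2 e2]]].
exists (s1 * s2)%N; split; first exact: ndvd_mul.
exists (c1 * s2 + c2 * s1); rewrite natrM mulrDr.
have -> : (s1%:R * s2%:R * q1 : rat) = s2%:R * (s1%:R * q1) by ring.
have -> : (s1%:R * s2%:R * q2 : rat) = s1%:R * (s2%:R * q2) by ring.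
rewrite e1 e2 rmorphD !rmorphM /= -!pmulrn; ring.
Qed.

Lemma Pp_int q : q \is a Num.int -> Pp q -> (p %| numq q)%Z.
Proof.
move=> qi [s [hs [c e]]].
have eq1 : ((s:int) * numq q = (p:int) * c)%R.
  apply: (@intr_inj rat); rewrite !rmorphM /= (numqK qi); exact: e.
have cop : coprimez p s by rewrite coprimezE /= prime_coprime.
rewrite -(Gauss_dvdzr _ cop) eq1; exact: dvdz_mulr.
Qed.

Variables (d a : nat) (J : K -> Prop).
Hypothesis kd : kills R d.
Hypothesis a0 : (0 < a)%N.
Hypothesis k0 : (0 < logn p a)%N.
Hypothesis klt : (logn p a < logn p d)%N.
Hypothesis Jsub : submodule Lp J.
Hypothesis Hinv : forall x, prod_set (prod_set (dual_plus R d a) Lp) J x <-> Lp x.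
Local Notation I := (dual_plus R d a).

Lemma TD0 : trace_dual R 0.
Proof. by move=> y _; rewrite mul0r trace0. Qed.

Lemma TD_R t r : trace_dual R t -> R r -> trace_dual R (t * r).
Proof. by move=> Ht Hr y Hy; rewrite -mulrA; apply: Ht; apply: RM. Qed.

Lemma F1 x y : I x -> J y -> Lp (x * y).
Proof.
move=> Ix Jy; apply/Hinv; exists 1%N, (fun _ => x), (fun _ => y); split => //.
  move=> _; exists 1%N, (fun _ => x), (fun _ => 1); split => //.
    by move=> _; exact: Lp1.
  by rewrite big_ord1 mulr1.
by rewrite big_ord1.
Qed.

Lemma Ia : I a%:R.
Proof. by exists 0, 1; split => //; [exact: TD0 | rewrite mulr0 add0r mulr1]. Qed.

Definition Good (x : K) := exists u al, [/\ x = d%:R * u + a%:R * al, Lp (d%:R * u),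
  (forall y, Lp y -> Pp (trace (d%:R * u * y))) &
  (forall t, trace_dual R t -> Lp (d%:R * t * al))].

Lemma Good0 : Good 0.
Proof.
exists 0, 0; split; first by rewrite !mulr0 addr0.
- by rewrite mulr0; exact: Lp0.
- by move=> y _; rewrite mulr0 mul0r trace0; exact: Pp0.
- by move=> t _; rewrite mulr0; exact: Lp0.
Qed.

Lemma GoodD x y : Good x -> Good y -> Good (x + y).
Proof.
case=> u1 [l1 [e1 L1 P1 T1]] [u2 [l2 [e2 L2 P2 T2]]].
exists (u1 + u2), (l1 + l2); split.
- by rewrite e1 e2 !mulrDr addrACA.
- by rewrite mulrDr; apply: LpD.
- by move=> z Hz; rewrite mulrDr mulrDl trace_add; apply: Pp_add; [apply: P1|apply: P2].
- by move=> t Ht; rewrite mulrDr; apply: LpD; [apply: T1|apply: T2].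
Qed.

Lemma Good_sum m (F : 'I_m -> K) : (forall i, Good (F i)) -> Good (\sum_i F i).
Proof. move=> H; apply: (big_ind Good Good0 GoodD) => i _; exact: H. Qed.

Lemma Good_IJ c z : I c -> J z -> Good (c * z).
Proof.
case=> u [rho [Tu Rrho ->]] Jz.
have dlogn : (0 < d)%N.
  by rewrite lt0n; apply/eqP => d0; move: klt; rewrite d0 logn0.
exists (u * z), (rho * z); split.
- by rewrite mulrDl !mulrA.
- rewrite mulrA; apply: F1 Jz; exists u, 0; split => //; first exact: R0'.
  by rewrite mulr0 addr0.
- move=> y Ly.
  have Lazy : Lp (a%:R * z * y) by apply: LpM => //; apply: F1 Jz; exact: Ia.
  case: Lazy => r' [s' [Rr' hs' ex]].
  have sK := natK_neq0 K (ndvd_pos hs').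
  have er : r' = a%:R * z * y * s'%:R by rewrite ex divfK.
  have key : (s' * a)%:R * trace (d%:R * (u * z) * y) = d%:R * trace (u * r').
    rewrite -!trace_natM; congr trace.
    by rewrite er natrM; ring.
  have ci := Tu _ Rr'.
  set T := trace _ in key *; set c0 := trace (u * r') in key ci.
  have [a' ca ea] := pfactor_coprime pp a0.
  have [d' cd ed] := pfactor_coprime pp dlogn.
  have klt' := klt; set k := logn p a in ea klt'; set e := logn p d in ed klt'.
  have ek : e = (k + 1 + (e - k - 1))%N by lia.
  set t := (e - k - 1)%N in ek.
  exists (s' * a')%N; split.
    by apply: ndvd_mul => //; rewrite -prime_coprime.
  exists ((d' * p ^ t)%:Z * numq c0).
  have Pne0 : ((p ^ k)%:R : rat) != 0 by rewrite pnatr_eq0 -lt0n expn_gt0 prime_gt0.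
  apply: (mulIf Pne0).
  transitivity ((s' * a)%:R * T); first by rewrite ea !natrM; ring.
  have hz : ((numq c0)%:~R : rat) = c0 by exact: numqK ci.
  rewrite key ed ek intrM hz -[(((d' * p ^ t)%N : int))%:~R]/(((d' * p ^ t)%N)%:R : rat).
  rewrite !natrM !natrX !exprD; ring.
- move=> t' Tt.
  have -> : d%:R * t' * (rho * z) = d%:R * (t' * rho) * z by rewrite !mulrA.
  apply: F1 Jz; exists (t' * rho), 0; split => //; [exact: TD_R | exact: R0' |].
  by rewrite mulr0 addr0.
Qed.

Lemma Good_PJ c z : prod_set I Lp c -> J z -> Good (c * z).
Proof.
case=> m [al [be [Ial Lbe ->]]] Jz.
rewrite mulr_suml; apply: Good_sum => i.
rewrite -mulrA; apply: Good_IJ => //.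
by case: Jsub => _ _; apply.
Qed.

Lemma Good1 : Good 1.
Proof.
have /Hinv [m [c [z [Pc Jz ->]]]] := Lp1.
apply: Good_sum => i; exact: Good_PJ.
Qed.

End Main.

Theorem proposition5p33 (K : fieldExtType rat) (R : K -> Prop) (n : nat)
  (d p a : nat) :
  full_order R n -> red_disc R d -> prime p -> (0 < a)%N ->
  (0 < logn p a)%N -> (logn p a < logn p d)%N ->
  invertible_at R p (dual_plus R d a) ->
  (p <= n)%N.
Proof.
move=> [R1 RM [b0 [b0B RZ]]] [d0 kd dmin] pp a0 k0 klt [J [Jsub Hinv]].
have hn := size_basis b0B; subst n.
rewrite leqNgt; apply/negP => Np.
have RD' : forall x y, R x -> R y -> R (x + y) := RD b0B RZ.
have RMz' : forall x z, R x -> R (x *~ z) := RMz b0B RZ.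
have [v [al [e1 L1 P1 T1]]] := Good1 R1 RM RD' RMz' pp a0 k0 klt Jsub Hinv.
set u := d%:R * v in e1 L1 P1.
have Lu := L1.
case: L1 => r [s [Rr hs eu]].
have sK := natK_neq0 K (ndvd_pos hs).
have er : r = u * s%:R by rewrite eu divfK.
have Htr : forall j, (0 < j)%N -> (p %| numq (trace (r ^+ j)))%Z.
  move=> j j0; apply: (Pp_int pp).
    by apply: (trace_R b0B RZ RM); apply: Rexp.
  have -> : r ^+ j = u * (u ^+ j.-1 * s%:R ^+ j).
    by rewrite er exprMn mulrA -exprS prednK.
  apply: P1; apply: (LpM RM pp); first exact: (LpX R1 RM pp).
  by rewrite -natrX; apply: (Lpnat R1 RMz' pp).
have [m [m0 [w [Rw ew]]]] := NL b0B RZ R1 RM pp Np Rr Htr.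
set w0 := w / (s ^ m)%:R.
have Lw0 : localize R p w0.
  exists w, (s ^ m)%N; split => //.
  by rewrite Euclid_dvdX // negb_and hs.
have E3 : u ^+ m = p%:R * w0.
  rewrite /w0 natrX mulrA -ew er [in RHS]exprMn mulfK //.
  by rewrite expf_neq0.
set S := \sum_(i < m) u ^+ i.
have LS : localize R p S.
  by apply: (Lpsum R1 RD' RMz' pp) => i; apply: (LpX R1 RM pp).
have E2 : (1 - u) * S = 1 - u ^+ m.
  rewrite -[X in X - u ^+ m](expr1n _ m) subrXX /S; congr (_ * _).
  by apply: eq_bigr => i _; rewrite expr1n mul1r.
have E1 : a%:R * al = 1 - u by rewrite [in RHS]e1 addrC addKr.
have pd : (p %| d)%N.
  by move: (ltn_trans k0 klt); rewrite logn_gt0 mem_primes => /and3P [].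
have pa : (p %| a)%N.
  by move: k0; rewrite logn_gt0 mem_primes => /and3P [].
set D := (d %/ p)%N; set A := (a %/ p)%N.
have Hd : (d%:R : K) = D%:R * p%:R by rewrite -natrM divnK.
have Ha : (a%:R : K) = A%:R * p%:R by rewrite -natrM divnK.
have killsD : kills R D.
  move=> t Ht.
  apply: (Lp_glob RD' RMz' pp).
    have eq : D%:R * t = d%:R * t * w0 + A%:R * (d%:R * t * al) * S.
      symmetry; rewrite Hd.
      transitivity (D%:R * t * (p%:R * w0) + D%:R * t * ((A%:R * p%:R * al) * S)).
        ring.
      rewrite -E3 -Ha E1 E2; ring.
    rewrite eq; apply: (LpD RD' RMz' pp).
      apply: (LpM RM pp) => //; apply: Lp_R => //; exact: kd.
    apply: (LpM RM pp) => //; apply: (LpM RM pp); first exact: (Lpnat R1 RMz' pp).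
    exact: T1.
  have -> : (D%:R * t) *+ p = d%:R * t by rewrite Hd -mulr_natr mulrAC.
  exact: kd.
have D0 : (0 < D)%N by rewrite divn_gt0 ?prime_gt0 // dvdn_leq.
have := dmin D D0 killsD.
by rewrite leqNgt ltn_Pdiv ?prime_gt1.
Qed.
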